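(* Let $F\subset\mathbb G^d$ be a nonempty closed set and $\tau=\tau_F$ the associated quasimeasure, with generating series $\sum_{\mathbf n}\widehat\tau_{\mathbf n}W_{\mathbf n}$ and partial sums $S_{\mathbf N}$. Then for every $\mathbf g\notin F$ there is $w=w(\mathbf g)\in\mathbb N_0$ such that $S_{2^w\mathbf M}(\mathbf g)=0$ for all $\mathbf M\in\mathbb N^d$.
   Context: Fix $d\ge2$. $\mathbb G$ is the dyadic group: sequences $g=(g_k)_{k\ge0}$, $g_k\in\{0,1\}$, coordinatewise addition mod 2, product topology; $\mathbb G^d$ its $d$-th power. For $n\in\mathbb N_0$, $n=\sum_kn_k2^k$, $n_k\in\{0,1\}$. Dyadic interval of rank $k$: $\Delta^{(k)}_m=\{g: g_t=m_{k-1-t},\ 0\le t<k\}$; dyadic cube $\Delta^{(k)}_{\mathbf m}=\prod_l\Delta^{(k)}_{m^l}$. Vector order coordinatewise, $\mathbf 1=(1,\dots,1)$. Walsh functions $W_n(g)=\prod_k(-1)^{g_kn_k}$, $W_{\mathbf n}(\mathbf g)=\prod_lW_{n^l}(g^l)$; $W^{(k)}_{\mathbf n\mathbf m}$ is the constant value of $W_{\mathbf n}$ on $\Delta^{(k)}_{\mathbf m}$ ($\mathbf n,\mathbf m<2^k\mathbf 1$). Partial sums $S_{\mathbf N}=\sum_{\mathbf n<\mathbf N}a_{\mathbf n}W_{\mathbf n}$. Quasimeasure: $\tau$ on dyadic cubes with $\tau(\Delta^{(k)}_{\mathbf m})=\sum_{\boldsymbol\sigma\in\{0,1\}^d}\tau(\Delta^{(k+1)}_{2\mathbf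 m+\boldsymbol\sigma})$; Fourier–Walsh coefficients $\widehat\tau_{\mathbf n}=\sum_{\mathbf m<2^k\mathbf 1}W^{(k)}_{\mathbf n\mathbf m}\tau(\Delta^{(k)}_{\mathbf m})$ ($\mathbf n<2^k\mathbf 1$); the series generating $\tau$ is $\sum\widehat\tau_{\mathbf n}W_{\mathbf n}$. $\tau_F$ is the unique nonnegative quasimeasure with $\tau_F(\mathbb G^d)=1$, $\tau_F(\Delta)=0$ iff $\Delta\cap F=\emptyset$, and such that if $\Delta^{(k)}_{\mathbf m}$ meets $F$ and exactly $M$ of its $2^d$ children $\Delta^{(k+1)}_{2\mathbf m+\boldsymbol\sigma}$ meet $F$, each of those has value $\tau_F(\Delta^{(k)}_{\mathbf m})/M$ and the others $0$. *)

(* Defs.v *)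
From HB Require Import structures.
From mathcomp Require Import all_boot all_order all_algebra.
From mathcomp Require Import all_classical all_reals topology cantor.
Set Implicit Arguments. Unset Strict Implicit. Unset Printing Implicit Defensive.
Import Order.TTheory GRing.Theory Num.Theory.
Local Open Scope ring_scope.

(* The dyadic group G = {0,1}^N with the product topology (cantor_space), and
   its d-th power G^d with the product topology. *)
Definition Gd (d : nat) : Type := prod_topology (fun _ : 'I_d => cantor_space).
HB.instance Definition _ d := Topological.on (Gd d).

Definition digit (n k : nat) : bool := odd (n %/ 2 ^ k).

Definition in_dyint (k m : nat) (g : cantor_space) : Prop :=
  forall t, (t < k)%N -> g t = digit m (k.-1 - t).

Definition in_dycube d (k : nat) (m : 'I_d -> nat) (g : Gd d) : Prop :=
  forall l, in_dyint k (m l) (g l).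

Definition idx_ok d (k : nat) (m : 'I_d -> nat) : Prop :=
  forall l, (m l < 2 ^ k)%N.

(* Walsh function W_n(g) = prod_k (-1)^{g_k n_k}; digits of n vanish for k >= n *)
Definition walsh {R : realType} (n : nat) (g : cantor_space) : R :=
  \prod_(k < n) (if g k && digit n k then -1 else 1).

Definition walshd {R : realType} d (n : 'I_d -> nat) (g : Gd d) : R :=
  \prod_(l < d) walsh (n l) (g l).

Definition dyrep (k m : nat) : cantor_space :=
  fun t => if (t < k)%N then digit m (k.-1 - t) else false.

(* W^{(k)}_{n m}: the (constant) value of W_n on Delta^(k)_m, for n,m < 2^k 1 *)
Definition walsh_cube {R : realType} d (k : nat) (n m : 'I_d -> nat) : R :=
  walshd n (fun l => dyrep k (m l)).

(* A function on dyadic cubes: tau k m = tau(Delta^(k)_m). *)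
Definition cubefun (R : realType) (d : nat) := nat -> ('I_d -> nat) -> R.

Definition child d (m : 'I_d -> nat) (s : {ffun 'I_d -> bool}) : 'I_d -> nat :=
  fun l => (2 * m l + s l)%N.

Definition quasimeasure {R : realType} d (tau : cubefun R d) : Prop :=
  forall k m, idx_ok k m ->
    tau k m = \sum_(s : {ffun 'I_d -> bool}) tau k.+1 (child m s).

Definition meets d (F : set (Gd d)) (k : nat) (m : 'I_d -> nat) : Prop :=
  exists g, F g /\ in_dycube k m g.

Definition nmeet d (F : set (Gd d)) (k : nat) (m : 'I_d -> nat) : nat :=
  #|[set s : {ffun 'I_d -> bool} | `[< meets F k.+1 (child m s) >] ]|.

Definition is_tauF {R : realType} d (F : set (Gd d)) (tau : cubefun R d) : Prop :=
  [/\ quasimeasure tau,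
      (forall k m, idx_ok k m -> 0 <= tau k m),
      tau 0%N (fun _ => 0%N) = 1,
      (forall k m, idx_ok k m -> (tau k m = 0 <-> ~ meets F k m)) &
      (forall k m, idx_ok k m -> meets F k m ->
        forall s : {ffun 'I_d -> bool},
          tau k.+1 (child m s) =
            if `[< meets F k.+1 (child m s) >]
            then tau k m / (nmeet F k m)%:R else 0)].

(* Fourier–Walsh coefficient, computed at rank k = max_l n_l (so n < 2^k 1);
   for a quasimeasure this does not depend on the admissible rank chosen. *)
Definition fw_coef {R : realType} d (tau : cubefun R d) (n : 'I_d -> nat) : R :=
  let k := (\max_(l < d) n l)%N in
  \sum_(m : {ffun 'I_d -> 'I_(2 ^ k)})
     walsh_cube k n (fun l => val (m l)) * tau k (fun l => val (m l)).

Definition psum {R : realType} d (a : ('I_d -> nat) -> R) (N : 'I_d -> nat)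
    (g : Gd d) : R :=
  \sum_(n : {ffun 'I_d -> 'I_(\max_(l < d) N l)} | [forall l, (n l < N l)%N])
     a (fun l => val (n l)) * walshd (fun l => val (n l)) g.

(* Main.v *)
Require Import Defs.
From HB Require Import structures.
From mathcomp Require Import all_boot all_order all_algebra.
From mathcomp Require Import all_classical all_reals topology cantor.
From mathcomp Require Import zify.
Import Order.TTheory GRing.Theory Num.Theory.
Local Open Scope ring_scope.
Local Open Scope classical_set_scope.

Lemma digit_big n k : (n < 2 ^ k)%N -> digit n k = false.
Proof. by move=> h; rewrite /digit divn_small. Qed.

Lemma digit_ge n k : (n <= k)%N -> digit n k = false.
Proof.
move=> h; apply: digit_big; apply: leq_trans (ltn_expl n (isT : (1 < 2)%N)) _.
by rewrite leq_pexp2l.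
Qed.

Lemma digit_child m (b : bool) k : digit (2 * m + b) k.+1 = digit m k.
Proof.
rewrite /digit expnS divnMA; congr (odd (_ %/ _)).
by rewrite mulnC divnMDl // divn_small ?addn0 //; case: b.
Qed.

Lemma digit_child0 m (b : bool) : digit (2 * m + b) 0 = b.
Proof. by rewrite /digit expn0 divn1 oddD oddM /=; case: b. Qed.

Lemma digit_addt m t : digit (m + 2 ^ t) t = ~~ digit m t.
Proof.
rewrite /digit divnDr // divnn expn_gt0 /= addn1 /=.
by [].
Qed.

Lemma digit_add_ne m t k : digit m t = false -> k != t ->
  digit (m + 2 ^ t) k = digit m k.
Proof.
move=> hm; case: (ltngtP k t) => // hkt _.
  rewrite /digit divnDr ?dvdn_exp2l ?(ltnW hkt) //.
  rewrite -expnB ?(ltnW hkt) // oddD oddX /=.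
  by rewrite subn_eq0 leqNgt hkt /= addbF.
rewrite /digit.
have -> : (2 ^ k = 2 ^ t * 2 ^ (k - t))%N by rewrite -expnD subnKC // ltnW.
rewrite !divnMA divnDr // divnn expn_gt0 /=.
move: hm; rewrite /digit => hm.
set a := (m %/ 2 ^ t)%N in hm *.
have ha : a = (a./2 * 2)%N by rewrite -[LHS]odd_double_half hm add0n -muln2.
have [j ->] : exists j, (k - t = j.+1)%N by exists (k - t).-1; rewrite prednK // subn_gt0.
by rewrite expnS !divnMA ha divnMDl // mulnK // (divn_small (isT : (1 < 2)%N)) addn0.
Qed.

Definition flipn (t n : nat) : nat := if digit n t then (n - 2 ^ t)%N else (n + 2 ^ t)%N.

Lemma digit_le n t : digit n t -> (2 ^ t <= n)%N.
Proof.
move=> h; rewrite leqNgt; apply/negP => /digit_big; by rewrite h.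
Qed.

Lemma digit_flip t n k : digit (flipn t n) k = (if k == t then ~~ digit n t else digit n k).
Proof.
rewrite /flipn; case: ifP => hn.
  have e : n = ((n - 2 ^ t) + 2 ^ t)%N by rewrite subnK // digit_le.
  have hm : digit (n - 2 ^ t) t = false.
    by move: hn; rewrite {1}e digit_addt => /negbTE.
  case: eqP => [->|/eqP hk]; first by rewrite hm.
  by rewrite {2}e digit_add_ne.
case: eqP => [->|/eqP hk]; first by rewrite digit_addt hn.
by rewrite digit_add_ne.
Qed.

Lemma flipnK t : involutive (flipn t).
Proof.
move=> n; have := digit_flip t n t; rewrite eqxx /flipn.
case hn: (digit n t) => /= h.
  by rewrite h subnK // digit_le ?hn.
by rewrite h addnK.
Qed.

Lemma flipn_lt t w n N : (t < w)%N -> (2 ^ w %| N)%N -> (n < N)%N -> (flipn t n < N)%N.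
Proof.
move=> tw /dvdnP [P ->] nN; rewrite /flipn; case: ifP => hn.
  exact: leq_ltn_trans (leq_subr _ _) nN.
have : (2 ^ t.+1 %| 2 ^ w)%N by rewrite dvdn_exp2l.
case/dvdnP => Q eQ.
have e := divn_eq n (2 ^ t); have r := ltn_pmod n (expn_gt0 2 t).
move: hn; rewrite /digit.
move: (n %/ 2 ^ t)%N (n %% 2 ^ t)%N e r => a r0 e r ha.
have ha2 : a = (a./2 * 2)%N by rewrite -[LHS]odd_double_half ha add0n -muln2.
move: nN; rewrite eQ expnS mulnA.
move: (2 ^ t)%N (P * Q)%N a./2 e r ha2 => X PQ b e r ha2 h.
subst a n.
have hb : (b < PQ)%N.
  have : (b * (2 * X) < PQ * (2 * X))%N by nia.
  by rewrite ltn_pmul2r //; nia.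
nia.
Qed.
Arguments flipn_lt {t w n N}.

Lemma walsh_widen (R : realType) n C (x : cantor_space) : (n <= C)%N ->
  walsh n x = \prod_(k < C) (if x k && digit n k then -1 else 1) :> R.
Proof.
move=> h; rewrite /walsh (big_ord_widen C (fun k => if x k && digit n k then -1 else 1 : R) h).
rewrite big_mkcond; apply: eq_bigr => k _; case: ifP => // /negbT.
by rewrite -leqNgt => /digit_ge ->; rewrite andbF.
Qed.

Lemma walsh_ext (R : realType) n (x y : cantor_space) :
  (forall k, digit n k -> x k = y k) -> walsh n x = walsh n y :> R.
Proof.
by move=> h; apply: eq_bigr => k _; case hd: (digit n k); rewrite ?andbF ?h.
Qed.

Lemma walsh2_flip (R : realType) t n (x y : cantor_space) : x t != y t ->
  walsh (flipn t n) x * walsh (flipn t n) y = - (walsh n x * walsh n y) :> R.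
Proof.
move=> hxy.
set C := (n + 2 ^ t + t).+1.
have h1 : (n <= C)%N by rewrite /C; lia.
have h2 : (flipn t n <= C)%N by rewrite /C /flipn; case: ifP => _; lia.
have ht : (t < C)%N by rewrite /C; lia.
rewrite !(walsh_widen R _ _ _ h1) !(walsh_widen R _ _ _ h2) -!big_split /=.
rewrite (bigD1 (Ordinal ht)) //= [in RHS](bigD1 (Ordinal ht)) //= digit_flip eqxx.
rewrite (eq_bigr (fun k : 'I_C => (if x k && digit n k then -1 else 1 : R) *
   (if y k && digit n k then -1 else 1))); last first.
  move=> k hk; have e : (nat_of_ord k == t) = false.
    by apply/negbTE; move: hk; apply: contra => /eqP e; apply/eqP/val_inj.
  by rewrite digit_flip e.
rewrite -mulNr; congr (_ * _).
by move: hxy; case: (x t); case: (y t); case: (digit n t) => //= _; rewrite ?mulr1 ?mul1r ?mulrN ?mulNr ?opprK.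
Qed.

Lemma walshd2_flip (R : realType) d (n : 'I_d -> nat) l0 t (x y : Gd d) : x l0 t != y l0 t ->
  walshd (fun l => if l == l0 then flipn t (n l) else n l) x *
  walshd (fun l => if l == l0 then flipn t (n l) else n l) y = - (walshd n x * walshd n y) :> R.
Proof.
move=> hxy; rewrite /walshd -!big_split /= (bigD1 l0) // [in RHS](bigD1 l0) //= eqxx.
rewrite walsh2_flip // mulNr; congr (- (_ * _)); apply: eq_bigr => l hl.
by rewrite (negbTE hl).
Qed.

Lemma sum_flip_zero (R : realType) d B (N : 'I_d -> nat) (x y : Gd d) l0 t w :
 (t < w)%N -> (forall l, (2 ^ w %| N l)%N) -> (forall l, (N l <= B)%N) -> x l0 t != y l0 t ->
 \sum_(n : {ffun 'I_d -> 'I_B} | [forall l, (n l < N l)%N])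
    (walshd (fun l => val (n l)) x * walshd (fun l => val (n l)) y) = 0 :> R.
Proof.
move=> tw hN hNB hxy.
pose fl (i : 'I_B) : 'I_B := insubd i (flipn t i).
have flv i : nat_of_ord (fl i) = if (flipn t i < B)%N then flipn t i else nat_of_ord i.
  by rewrite /fl -[nat_of_ord _]/(val _) val_insubd.
have flK : involutive fl.
  move=> i; apply: val_inj => /=; have e := flv i.
  by case h: (flipn t i < B)%N; rewrite h in e; rewrite flv e ?h ?flipnK ?ltn_ord.
pose phi (n : {ffun 'I_d -> 'I_B}) := [ffun l => if l == l0 then fl (n l) else n l].
have phiK : involutive phi.
  move=> n; apply/ffunP => l; rewrite !ffunE.
  by case e: (l == l0); rewrite ?ffunE ?e ?flK.
have hP n : [forall l, (phi n l < N l)%N] = [forall l, (n l < N l)%N].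
  apply/forallP/forallP => h l; have := h l; rewrite ffunE; case: eqP => // ->; rewrite flv;
    case: ifP => // _.
    by move=> hl; have := flipn_lt tw (hN l0) hl; rewrite flipnK.
  by move=> hl; apply: (flipn_lt tw (hN l0) hl).
have hG (n : {ffun 'I_d -> 'I_B}) : [forall l, (n l < N l)%N] ->
   walshd (fun l => val (phi n l)) x * walshd (fun l => val (phi n l)) y =
   - (walshd (fun l => val (n l)) x * walshd (fun l => val (n l)) y) :> R.
  move=> /forallP hn.
  have -> : (fun l => val (phi n l)) = (fun l => if l == l0 then flipn t (n l) else n l).
    apply: funext => l; rewrite ffunE; case: eqP => // ->; rewrite /= flv.
    by rewrite (leq_trans (flipn_lt tw (hN l0) (hn l0)) (hNB l0)).
  exact: walshd2_flip.
set S := (X in X = 0).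
have : S = - S.
  rewrite {1}/S (reindex_inj (can_inj phiK)) /=.
  rewrite (eq_bigl (fun n : {ffun 'I_d -> 'I_B} => [forall l, (n l < N l)%N])) //.
  by rewrite -sumrN; apply: eq_bigr => n hn; rewrite hG.
by move=> /eqP; rewrite -addr_eq0 -mulr2n mulrn_eq0 => /eqP.
Qed.

Definition fw_at {R : realType} {d} (tau : cubefun R d) (K : nat) (n : 'I_d -> nat) : R :=
  \sum_(m : {ffun 'I_d -> 'I_(2 ^ K)})
     walsh_cube K n (fun l => val (m l)) * tau K (fun l => val (m l)).

Lemma walsh_cube_child (R : realType) d K (n m : 'I_d -> nat) s :
  (forall l, (n l < 2 ^ K)%N) ->
  walsh_cube K.+1 n (child m s) = walsh_cube K n m :> R.
Proof.
move=> hn; rewrite /walsh_cube /walshd; apply: eq_bigr => l _; apply: walsh_ext => k hk.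
have kK : (k < K)%N.
  rewrite ltnNge; apply/negP => Kk; move: hk; rewrite digit_big //.
  by apply: leq_trans (hn l) _; rewrite leq_pexp2l.
rewrite /dyrep /child kK (ltn_trans kK (ltnSn K)) /=.
have -> : (K - k = (K.-1 - k).+1)%N by lia.
exact: digit_child.
Qed.

Lemma child_lt K a (b : bool) : (a < 2 ^ K)%N -> (2 * a + b < 2 ^ K.+1)%N.
Proof. rewrite expnS; case: b => /=; lia. Qed.

Lemma half_lt K a : (a < 2 ^ K.+1)%N -> (a %/ 2 < 2 ^ K)%N.
Proof. by rewrite expnS ltn_divLR // mulnC. Qed.

Lemma fw_at_step (R : realType) d (tau : cubefun R d) K n :
  quasimeasure tau -> (forall l, (n l < 2 ^ K)%N) -> fw_at tau K n = fw_at tau K.+1 n.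
Proof.
move=> hq hn; rewrite /fw_at.
pose G (f : 'I_d -> nat) := walsh_cube K.+1 n f * tau K.+1 f.
transitivity (\sum_(m : {ffun 'I_d -> 'I_(2 ^ K)}) \sum_(s : {ffun 'I_d -> bool})
    G (child (fun l => val (m l)) s)).
  apply: eq_bigr => m _; rewrite hq; last by move=> l; exact: ltn_ord.
  by rewrite mulr_sumr; apply: eq_bigr => s _; rewrite /G walsh_cube_child.
rewrite pair_big /=.
pose h (p : {ffun 'I_d -> 'I_(2 ^ K)} * {ffun 'I_d -> bool}) : {ffun 'I_d -> 'I_(2 ^ K.+1)} :=
  [ffun l => Ordinal (@child_lt K (p.1 l) (p.2 l) (ltn_ord (p.1 l)))].
pose h' (m : {ffun 'I_d -> 'I_(2 ^ K.+1)}) : {ffun 'I_d -> 'I_(2 ^ K)} * {ffun 'I_d -> bool} :=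
  ([ffun l => Ordinal (@half_lt K (m l) (ltn_ord (m l)))], [ffun l => odd (m l)]).
have hb : bijective h.
  exists h'.
    move=> [m s]; rewrite /h /h' /=; congr (_, _); apply/ffunP => l; rewrite !ffunE /=.
      by apply: val_inj => /=; case: (s l) => /=; lia.
    by rewrite oddD oddM /=; case: (s l).
  move=> m; apply/ffunP => l; rewrite !ffunE; apply: val_inj => /=.
  have e := odd_double_half (m l); rewrite -divn2 -muln2 in e; lia.
rewrite [RHS](reindex h) /=; last exact: onW_bij.
apply: eq_bigr => p _; rewrite /G; congr (walsh_cube _ _ _ * tau _ _);
  by apply: funext => l; rewrite /child ffunE.
Qed.

Lemma fw_at_ge (R : realType) d (tau : cubefun R d) K n :
  quasimeasure tau -> (\max_(l < d) n l <= K)%N -> fw_coef tau n = fw_at tau K n.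
Proof.
move=> hq; rewrite /fw_coef -/(fw_at tau _ n).
set k0 := (\max_(l < d) n l)%N.
have hk0 : forall l, (n l <= k0)%N by move=> l; rewrite /k0; exact: leq_bigmax.
clearbody k0; elim: K => [|K IH]; first by move=> h; have -> : k0 = 0%N by apply/eqP; rewrite -leqn0.
rewrite leq_eqVlt => /orP [/eqP e|hK]; first by rewrite e.
rewrite ltnS in hK; rewrite (IH hK).
apply: fw_at_step => // l; apply: leq_ltn_trans (leq_trans (hk0 l) hK) _.
exact: ltn_expl.
Qed.
Lemma ptws_seq_cvg (I : eqType) (T : I -> topologicalType) (u : nat -> prod_topology T) (x : prod_topology T) :
  (forall i, (fun n => u n i) @ \oo --> x i) -> u @ \oo --> x.
Proof.
move=> H; apply/cvg_sup => i.
apply/cvg_image.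
  rewrite eqEsubset; split=> // y _; exists (dfwith x i y) => //.
  by rewrite /= dfwithin.
move=> W /H Wn /=.
exists ((fun f : prod_topology T => f i) @^-1` W).
  exact: Wn.
rewrite eqEsubset; split => [y [f Wf <-] //|y Wy].
by exists (dfwith x i y); rewrite /= dfwithin.
Qed.

Lemma sep_w d (F : set (Gd d)) (hFc : closed F) (g : Gd d) : ~ F g ->
  exists w, forall h : Gd d, (forall l t, (t < w)%N -> h l t = g l t) -> ~ F h.
Proof.
move=> nFg; apply: contrapT => /forallNP H.
have H' : forall w, exists h : Gd d, (forall l t, (t < w)%N -> h l t = g l t) /\ F h.
  move=> w; have := H w; move=> /existsNP [h /existsNP [Hh /contrapT Fh]].
  by exists h.
have [h Hh] := choice H'.
apply: nFg.
apply: (@closed_cvg nat (Gd d) \oo _ h F hFc); first by apply: nearW => n; case: (Hh n).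
apply: (@ptws_seq_cvg _ (fun _ : 'I_d => cantor_space)) => l.
apply: (@ptws_seq_cvg _ (fun _ : nat => bool)) => t.
apply: cvg_near_cst.
exists t.+1 => // n /= tn.
by case: (Hh n) => + _; apply.
Qed.

Theorem corollary1 (R : realType) (d : nat) (hd : (2 <= d)%N)
  (F : set (Gd d)) (hF0 : F !=set0) (hFc : closed F)
  (tau : cubefun R d) (htau : is_tauF F tau) :
  forall g : Gd d, ~ F g ->
    exists w : nat, forall M : 'I_d -> nat, (forall l, (0 < M l)%N) ->
      psum (fw_coef tau) (fun l => (2 ^ w * M l)%N) g = 0.
Proof.
move=> g nFg.
case: htau => hq hpos h0 hzero hsplit.
have [w hw] := @sep_w d F hFc g nFg.
exists w => M hM.
rewrite /psum.
set N := (fun l => (2 ^ w * M l)%N).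
set B := (\max_(l < d) N l)%N.
have hNB : forall l, (N l <= B)%N by move=> l; rewrite /B; exact: leq_bigmax.
have hNd : forall l, (2 ^ w %| N l)%N by move=> l; apply: dvdn_mulr.
have l1 : 'I_d := Ordinal (leq_trans (isT : (0 < 2)%N) hd).
have hwB : (w <= B)%N.
  apply: ltnW; apply: leq_trans (hNB l1); apply: leq_trans (ltn_expl w (isT : (1 < 2)%N)) _.
  by rewrite /N leq_pmulr.
rewrite (eq_bigr (fun n : {ffun 'I_d -> 'I_B} =>
   \sum_(m : {ffun 'I_d -> 'I_(2 ^ B)}) tau B (fun l => val (m l)) *
     (walshd (fun l => val (n l)) (fun l => dyrep B (m l)) * walshd (fun l => val (n l)) g))); last first.
  move=> n _; rewrite (@fw_at_ge R d tau B _ hq); last first.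
    by apply/bigmax_leqP => l _; exact: ltnW (ltn_ord (n l)).
  rewrite /fw_at mulr_suml; apply: eq_bigr => m _; rewrite /walsh_cube.
  by rewrite [X in X * _]mulrC -mulrA.
rewrite exchange_big /=; apply: big1 => m _.
rewrite -mulr_sumr.
have [H|H] := pselect (forall l t, (t < w)%N -> dyrep B (m l) t = g l t).
  have -> : tau B (fun l => val (m l)) = 0; last by rewrite mul0r.
  apply/(hzero _ _ _); first by move=> l; exact: ltn_ord.
  move=> [h [Fh hc]]; apply: (hw h) _ Fh => l t tw.
  rewrite -(H l t tw) (hc l t (leq_trans tw hwB)) /dyrep.
  by rewrite (leq_trans tw hwB).
have [l0 [t [tw ht]]] : exists l0 t, (t < w)%N /\ dyrep B (m l0) t != g l0 t.
  apply: contrapT => hne; apply: H => l t tw; apply: contrapT => hn.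
  by apply: hne; exists l, t; split => //; apply/eqP.
by rewrite (@sum_flip_zero R d B N (fun l => dyrep B (m l)) g l0 t w) ?mulr0.
Qed.
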